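(* In the setting of the context (with $p>L$), for every $t\ge0$ the iterates of Smoothed-GDA satisfy $$d(y^{t+1},z^{t+1})-d(y^t,z^t)\ge\langle\nabla_yK(x(y^t,z^t),z^t;y^t),\,y^{t+1}-y^t\rangle-\frac{L_d}{2}\|y^t-y^{t+1}\|^2+\frac p2(z^{t+1}-z^t)^T\big(z^{t+1}+z^t-2x(y^{t+1},z^{t+1})\big),$$ where $L_d=L+L\sigma_2$, $\sigma_2=\frac{2(p+L)}{p-L}$, and $\nabla_yK(x(y^t,z^t),z^t;y^t)=\nabla_yd(y^t,z^t)$.
   Context: $X\subseteq\mathbb{R}^n$ nonempty closed convex, $Y\subseteq\mathbb{R}^m$ nonempty closed convex compact, $f$ continuously differentiable with $f(x,\cdot)$ concave, $\nabla_xf,\nabla_yf$ $L$-Lipschitz. $K(x,z;y)=f(x,y)+\frac p2\|x-z\|^2$, $x(y,z)=\arg\min_{x\in X}K(x,z;y)$, $d(y,z)=\min_{x\in X}K(x,z;y)$. Smoothed-GDA with $c,\alpha>0$, $0<\beta\le1$: $x^{t+1}=P_X(x^t-c\nabla_xK(x^t,z^t;y^t))$, $y^{t+1}=P_Y(y^t+\alpha\nabla_yK(x^{t+1},z^t;y^t))$, $z^{t+1}=z^t+\beta(x^{t+1}-z^t)$ ($P_S$ Euclidean projection). *)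

(* Defs.v *)
From HB Require Import structures.
From mathcomp Require Import all_boot all_order all_algebra.
From mathcomp Require Import all_classical all_reals all_analysis.
Set Implicit Arguments. Unset Strict Implicit. Unset Printing Implicit Defensive.
Import Order.TTheory GRing.Theory Num.Theory.
Import numFieldNormedType.Exports.
Local Open Scope classical_set_scope.
Local Open Scope ring_scope.

Section Defs.
Variable R : realType.

Definition dotp (k : nat) (u v : 'rV[R]_k) : R := \sum_(i < k) u ord0 i * v ord0 i.
Definition enorm (k : nat) (u : 'rV[R]_k) : R := Num.sqrt (dotp u u).

(* Euclidean projection onto S (well defined: S nonempty closed convex) *)
Definition eproj (k : nat) (S : set 'rV[R]_k) (v : 'rV[R]_k) : 'rV[R]_k :=
  get [set u | S u /\ forall w, S w -> enorm (v - u) <= enorm (v - w)].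

Definition Kfun (n m : nat) (f : 'rV[R]_n -> 'rV[R]_m -> R) (p : R)
  (x z : 'rV[R]_n) (y : 'rV[R]_m) : R :=
  f x y + p / 2 * enorm (x - z) ^+ 2.

(* x(y,z) = argmin_{x in X} K(x,z;y)  (a chosen minimizer; unique when p > L) *)
Definition xopt (n m : nat) (f : 'rV[R]_n -> 'rV[R]_m -> R) (p : R)
  (X : set 'rV[R]_n) (y : 'rV[R]_m) (z : 'rV[R]_n) : 'rV[R]_n :=
  get [set x | X x /\ forall x', X x' -> Kfun f p x z y <= Kfun f p x' z y].

Definition dfun (n m : nat) (f : 'rV[R]_n -> 'rV[R]_m -> R) (p : R)
  (X : set 'rV[R]_n) (y : 'rV[R]_m) (z : 'rV[R]_n) : R :=
  Kfun f p (xopt f p X y z) z y.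

Definition gradxK (n m : nat) (gx : 'rV[R]_n -> 'rV[R]_m -> 'rV[R]_n) (p : R)
  (x z : 'rV[R]_n) (y : 'rV[R]_m) : 'rV[R]_n := gx x y + p *: (x - z).
Definition gradyK (n m : nat) (gy : 'rV[R]_n -> 'rV[R]_m -> 'rV[R]_m)
  (x z : 'rV[R]_n) (y : 'rV[R]_m) : 'rV[R]_m := gy x y.

End Defs.

(* Main.v *)
Require Import Defs.
From mathcomp Require Import ring lra.
From HB Require Import structures.
From mathcomp Require Import all_boot all_order all_algebra.
From mathcomp Require Import all_classical all_reals all_analysis.
Import Order.TTheory GRing.Theory Num.Theory.
Import numFieldNormedType.Exports.
Local Open Scope classical_set_scope.
Local Open Scope ring_scope.

Set Implicit Arguments. Unset Strict Implicit. Unset Printing Implicit Defensive.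



Section Dot.
Variable R : realType.
Variable k : nat.
Implicit Types u v w : 'rV[R]_k.

Lemma dotpC u v : dotp u v = dotp v u.
Proof. by apply: eq_bigr => i _; rewrite mulrC. Qed.

Lemma dotpDl u v w : dotp (u + v) w = dotp u w + dotp v w.
Proof. by rewrite /dotp -big_split; apply: eq_bigr => i _; rewrite !mxE mulrDl. Qed.

Lemma dotpZl a u v : dotp (a *: u) v = a * dotp u v.
Proof. by rewrite /dotp mulr_sumr; apply: eq_bigr => i _; rewrite !mxE mulrA. Qed.

Lemma dotpNl u v : dotp (- u) v = - dotp u v.
Proof. by rewrite -scaleN1r dotpZl mulN1r. Qed.

Lemma dotpBl u v w : dotp (u - v) w = dotp u w - dotp v w.
Proof. by rewrite dotpDl dotpNl. Qed.

Lemma dotpDr u v w : dotp w (u + v) = dotp w u + dotp w v.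
Proof. by rewrite dotpC dotpDl !(dotpC w). Qed.
Lemma dotpZr a u v : dotp v (a *: u) = a * dotp v u.
Proof. by rewrite dotpC dotpZl dotpC. Qed.
Lemma dotpNr u v : dotp v (- u) = - dotp v u.
Proof. by rewrite dotpC dotpNl dotpC. Qed.
Lemma dotpBr u v w : dotp w (u - v) = dotp w u - dotp w v.
Proof. by rewrite dotpDr dotpNr. Qed.
Lemma dotp0l v : dotp 0 v = 0.
Proof. by rewrite -(scale0r 0) dotpZl mul0r. Qed.
Lemma dotp0r v : dotp v 0 = 0.
Proof. by rewrite dotpC dotp0l. Qed.

Lemma dotp_ge0 u : 0 <= dotp u u.
Proof. by apply: sumr_ge0 => i _; rewrite -expr2 sqr_ge0. Qed.

Lemma dotp_eq0 u : dotp u u = 0 -> u = 0.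
Proof.
move=> /eqP; rewrite psumr_eq0; last by move=> i _; rewrite -expr2 sqr_ge0.
move=> /allP H; apply/matrixP => i j; rewrite (ord1 i) mxE.
by have := H j (mem_index_enum _); rewrite -expr2 sqrf_eq0 => /eqP.
Qed.

Lemma enorm_ge0 u : 0 <= enorm u.
Proof. exact: sqrtr_ge0. Qed.

Lemma enorm_sq u : enorm u ^+ 2 = dotp u u.
Proof. by rewrite /enorm sqr_sqrtr // dotp_ge0. Qed.

Lemma CS u v : dotp u v <= enorm u * enorm v.
Proof.
have [v0|] := eqVneq (dotp v v) 0.
  by rewrite (dotp_eq0 v0) dotp0r mulr_ge0 // enorm_ge0.
move=> vn0; have vp : 0 < dotp v v by rewrite lt_def vn0 dotp_ge0.
set t := dotp u v / dotp v v.
have H := dotp_ge0 (u - t *: v).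
rewrite !(dotpBl, dotpBr, dotpZl, dotpZr) (dotpC v u) in H.
have H2 : dotp u v ^+ 2 <= dotp u u * dotp v v.
  have tv : t * dotp v v = dotp u v by rewrite /t divfK.
  rewrite tv subrr mulr0 subr0 subr_ge0 /t mulrAC ler_pdivrMr // in H.
have [uv0|uvp] := lerP (dotp u v) 0.
  by apply: le_trans uv0 _; rewrite mulr_ge0 // enorm_ge0.
rewrite -(ger0_norm (ltW uvp)).
rewrite -sqrtr_sqr /enorm -sqrtrM ?dotp_ge0 //.
by rewrite ler_sqrt // mulr_ge0 // dotp_ge0.
Qed.
End Dot.

Section An.
Variable R : realType.
Variable V : normedModType R.

Lemma cont_of_bound (g : V -> R) x C :
  (forall u, `|u| <= 1 -> `|g (x + u) - g x| <= C * `|u|) -> {for x, continuous g}.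
Proof.
move=> H; apply/cvgrPdist_le => e e0.
have C1 : 0 < `|C| + 1 by rewrite ltr_pwDr // normr_ge0.
apply/nbhs_normP; exists (Num.min 1 (e / (`|C| + 1))).
  by rewrite /= lt_min ltr01 divr_gt0.
move=> t /=; rewrite lt_min => /andP[t1 te].
have -> : t = x + (t - x) by rewrite addrC subrK.
rewrite distrC; apply: le_trans (H _ _) _.
  by rewrite distrC ltW.
rewrite distrC; apply: (le_trans (ler_wpM2r (normr_ge0 _) (ler_norm C))).
apply: (le_trans (ler_wpM2r (normr_ge0 _) (ler_wpDr ler01 (lexx `|C|)))).
rewrite mulrC -ler_pdivlMr //; exact: ltW.
Qed.

Lemma diff_of_bound (g : V -> R) x (l : {linear V -> R}) C :
  continuous l ->
  (forall u, `|u| <= 1 -> `|g (x + u) - g x - l u| <= C * `|u| ^+ 2) ->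
  differentiable g x /\ 'd g x = l :> (V -> R).
Proof.
move=> lc H.
have E : g \o shift x = cst (g x) + l +o_ 0 id.
  apply/eqaddoP => e e0.
  have C1 : 0 < `|C| + 1 by rewrite ltr_pwDr // normr_ge0.
  apply/nbhs_norm0P; exists (Num.min 1 (e / (`|C| + 1))).
    by rewrite /= lt_min ltr01 divr_gt0.
  move=> u /=; rewrite lt_min => /andP[u1 ue].
  have -> : (g \o +%R^~ x - (cst (g x) + l)) u = g (x + u) - g x - l u.
    by rewrite -[(_ - _) u]/(g (u + x) - (g x + l u)) [u + x]addrC opprD addrA.
  apply: le_trans (H _ (ltW u1)) _.
  rewrite expr2 mulrA ler_wpM2r //.
  apply: (le_trans (ler_wpM2r (normr_ge0 _) (ler_norm C))).
  apply: (le_trans (ler_wpM2r (normr_ge0 _) (ler_wpDr ler01 (lexx `|C|)))).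
  rewrite mulrC -ler_pdivlMr //; exact: ltW.
have dE := diff_unique lc E.
split => //; apply/diff_locallyP; rewrite dE; split => //.
Qed.
End An.

Section An.
Variable R : realType.
Variable V : normedModType R.

Lemma line_is_derive (F : V -> R) a v s : differentiable F (a + s *: v) ->
  is_derive s 1 (fun s => F (a + s *: v)) ('d F (a + s *: v) v).
Proof.
move=> dF.
have h1 : is_diff s (fun s : R => a + s *: v) (fun h => 0 + h *: v).
  have e1 : (fun s : R => a + s *: v) = cst a + ( *:%R^~ v) by [].
  have e2 : (fun h : R => 0 + h *: v) = (0 : R -> V) + ( *:%R^~ v) by [].
  rewrite e1 e2; apply: is_diffD.
have h2 : is_diff (a + s *: v) F ('d F (a + s *: v)) by exact: differentiableP.
have h3 := is_diff_comp h1 h2.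
have d3 : differentiable (F \o (fun s : R => a + s *: v)) s by exact: ex_diff.
apply: DeriveDef; first exact: diff_derivable.
by rewrite deriveE // diff_val /= add0r scale1r.
Qed.
End An.

Section An.
Variable R : realType.

Lemma poly2_derive (a b s : R) :
  is_derive s 1 (fun t : R => a * (t * t) + b * t) (2 * a * s + b).
Proof.
have h1 : is_derive s 1 (fun t : R => t * t) (s + s).
  have := @is_deriveM R R id id s 1 1 1 (is_derive_id _ _) (is_derive_id _ _).
  by rewrite /= !scaler1.
have h2 := is_deriveZ a h1.
have h3 := is_deriveZ b (is_derive_id s (1:R)).
have h4 := is_deriveD h2 h3.
apply: is_derive_eq.
  rewrite -[LHS]/(a * (s + s) + b * 1); ring.
Qed.

Lemma quad1d (phi phi' : R -> R) (D K : R) :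
  (forall s : R, is_derive s 1 phi (phi' s)) ->
  (forall s : R, 0 <= s -> s <= 1 -> `|phi' s - D| <= K * s) ->
  `|phi 1 - phi 0 - D| <= K / 2.
Proof.
move=> dphi Hb.
have c1 : forall (a b : R), {within `[0, 1], continuous (fun t => phi t + (a * (t * t) + b * t))}.
  move=> a b; apply: derivable_within_continuous => t _.
  apply: derivableD; first by have [] := dphi t.
  by have [] := poly2_derive a b t.
have H1 : phi 0 + (K/2 * (0 * 0) + (-D) * 0) <= phi 1 + (K/2 * (1 * 1) + (-D) * 1).
  apply: (@ger0_derive1_ndecr _ (fun t => phi t + (K/2 * (t * t) + (-D) * t)) 0 1) => //.
  move=> t; rewrite in_itv /= => /andP[t0 t1].
  rewrite derive1E.
  have := is_deriveD (dphi t) (poly2_derive (K/2) (-D) t).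
  move=> /(@derive_val _ _ _ _ _ _ _) ->.
  have := Hb t (ltW t0) (ltW t1); rewrite ler_norml => /andP[h _].
  lra.
have H2 : phi 1 + ((-K/2) * (1 * 1) + (-D) * 1) <= phi 0 + ((-K/2) * (0 * 0) + (-D) * 0).
  apply: (@ler0_derive1_nincr _ (fun t => phi t + ((-K/2) * (t * t) + (-D) * t)) 0 1) => //.
  move=> t; rewrite in_itv /= => /andP[t0 t1].
  rewrite derive1E.
  have := is_deriveD (dphi t) (poly2_derive (-K/2) (-D) t).
  move=> /(@derive_val _ _ _ _ _ _ _) ->.
  have := Hb t (ltW t0) (ltW t1); rewrite ler_norml => /andP[_ h].
  lra.
rewrite ler_norml; apply/andP; split; lra.
Qed.
End An.





Section Dot2.
Variable R : realType.
Variable k : nat.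
Implicit Types u v w : 'rV[R]_k.

Lemma CSabs u v : `|dotp u v| <= enorm u * enorm v.
Proof.
rewrite ler_norml CS andbT.
have := CS (- u) v; rewrite dotpNl.
have -> : enorm (- u) = enorm u by rewrite /enorm dotpNl dotpNr opprK.
by rewrite lerNl.
Qed.

Lemma enormZ a u : enorm (a *: u) = `|a| * enorm u.
Proof.
by rewrite /enorm dotpZl dotpZr mulrA -expr2 sqrtrM ?sqr_ge0 // sqrtr_sqr.
Qed.

Lemma enormN u : enorm (- u) = enorm u.
Proof. by rewrite -scaleN1r enormZ normrN normr1 mul1r. Qed.

Lemma enorm0 : enorm (0 : 'rV[R]_k) = 0.
Proof. by rewrite /enorm dotp0l sqrtr0. Qed.

Lemma enormB u v : enorm (u - v) = enorm (v - u).
Proof. by rewrite -enormN opprB. Qed.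

Lemma enormD2 u v : enorm (u + v) ^+ 2 = enorm u ^+ 2 + 2 * dotp u v + enorm v ^+ 2.
Proof.
rewrite !enorm_sq dotpDl !dotpDr (dotpC v u); ring.
Qed.

Lemma enormB2 u v : enorm (u - v) ^+ 2 = enorm u ^+ 2 - 2 * dotp u v + enorm v ^+ 2.
Proof. by rewrite enormD2 dotpNr enormN; ring. Qed.

Lemma coord_le_mx u i : `|u ord0 i| <= `|u|.
Proof.
have /mapP[j Hj ->] : `|u ord0 i| \in [seq `|u x.1 x.2| | x : 'I_1 * 'I_k].
  by apply/mapP; exists (ord0, i) => //=; rewrite mem_enum.
by rewrite -[leRHS]/(mx_norm u) mx_normrE; apply/bigmax_geP; right => /=; exists j.
Qed.

Lemma coord_le_enorm u i : `|u ord0 i| <= enorm u.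
Proof.
rewrite -(sqrtr_sqr (u ord0 i)) /enorm ler_sqrt ?dotp_ge0 //.
rewrite /dotp (bigD1 i) //= -expr2 lerDl.
by apply: sumr_ge0 => j _; rewrite -expr2 sqr_ge0.
Qed.

Lemma mx_le_enorm u : `|u| <= enorm u.
Proof.
have [/eqP|] := eqVneq (`|u|) 0.
  by rewrite normr_eq0 => /eqP ->; rewrite normr0 enorm0.
rewrite -[`|u|]/(mx_norm u) => /mx_norm_neq0 [[i j] ->]; rewrite (ord1 i); exact: coord_le_enorm.
Qed.

Lemma enorm_le_mx u : enorm u ^+ 2 <= k%:R * `|u| ^+ 2.
Proof.
rewrite enorm_sq /dotp.
have -> : k%:R * `|u| ^+ 2 = \sum_(i < k) `|u| ^+ 2.
  by rewrite sumr_const card_ord mulr_natl.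
apply: ler_sum => i _; rewrite -expr2 -real_normK ?num_real //.
by rewrite lerXn2r ?nnegrE ?normr_ge0 // coord_le_mx.
Qed.
End Dot2.

Section Cont.
Variable R : realType.
Variable k : nat.

Lemma enorm_le_mx1 (u : 'rV[R]_k) : enorm u <= (k%:R + 1) * `|u|.
Proof.
have h := enorm_le_mx u.
have h0 : 0 <= (k%:R + 1) * `|u| by rewrite mulr_ge0 // addr_ge0.
rewrite -(ler_pXn2r (_ : 0 < 2)%N) ?nnegrE ?enorm_ge0 //.
apply: le_trans h _; rewrite exprMn ler_wpM2r ?sqr_ge0 //.
rewrite expr2 mulrDl mulrDr mul1r mulr1.
have kk : (0:R) <= k%:R by [].
have := mulr_ge0 kk kk; lra.
Qed.

Lemma cont_quad (g : 'rV[R]_k -> R) x A B :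
  (forall u, `|g (x + u) - g x| <= A * enorm u + B * enorm u ^+ 2) ->
  {for x, continuous g}.
Proof.
move=> H; pose c : R := k%:R + 1.
have c0 : 0 <= c by rewrite addr_ge0.
apply: (@cont_of_bound R _ g x (`|A| * c + `|B| * c ^+ 2)) => u u1.
apply: le_trans (H u) _.
have e1 := enorm_le_mx1 u; rewrite -/c in e1.
have e0 := enorm_ge0 u.
have n0 : 0 <= `|u| by [].
rewrite mulrDl; apply: lerD.
  apply: le_trans (ler_norm _) _; rewrite normrM (ger0_norm e0) -mulrA.
  by rewrite ler_wpM2l.
apply: le_trans (ler_norm _) _; rewrite normrM normrX (ger0_norm e0).
rewrite -mulrA ler_wpM2l //.
apply: (@le_trans _ _ ((c * `|u|) ^+ 2)).
  by rewrite lerXn2r ?nnegrE // mulr_ge0.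
rewrite exprMn ler_wpM2l ?exprn_ge0 // expr2 ler_piMr //.
Qed.
End Cont.




Section An2.
Variable R : realType.
Variable V : normedModType R.

Lemma descent (F : V -> R) (dF : V -> V -> R) (a v : V) (K : R) :
  (forall w, differentiable F w) -> (forall w, 'd F w v = dF w v) ->
  (forall s : R, 0 <= s -> s <= 1 -> `|dF (a + s *: v) v - dF a v| <= K * s) ->
  `|F (a + v) - F a - dF a v| <= K / 2.
Proof.
move=> dF0 dFE Hb.
have := @quad1d R (fun s => F (a + s *: v)) (fun s => 'd F (a + s *: v) v) ('d F a v) K.
rewrite scale1r scale0r addr0 !dFE; apply => //.
  by move=> s; apply: line_is_derive.
by move=> s s0 s1; rewrite !dFE; apply: Hb.
Qed.
End An2.

Lemma pairD (K : realType) (U W : normedModType K) (a c : U) (b d : W) :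
  (a, b) + (c, d) = (a + c, b + d).
Proof. by []. Qed.
Lemma pairZ (K : realType) (U W : normedModType K) (k : K) (a : U) (b : W) :
  k *: (a, b) = (k *: a, k *: b).
Proof. by []. Qed.

Section Main.
Variables (R : realType) (n m : nat) (f : 'rV[R]_n -> 'rV[R]_m -> R)
  (gx : 'rV[R]_n -> 'rV[R]_m -> 'rV[R]_n)
  (gy : 'rV[R]_n -> 'rV[R]_m -> 'rV[R]_m) (L : R).
Hypothesis Hd : forall (x : 'rV[R]_n) (y : 'rV[R]_m),
      differentiable (fun w : 'rV[R]_n * 'rV[R]_m => f w.1 w.2) (x, y) /\
      forall u v, 'd (fun w : 'rV[R]_n * 'rV[R]_m => f w.1 w.2) (x, y) (u, v)
                  = dotp (gx x y) u + dotp (gy x y) v.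
Hypothesis Hlx : forall x y x' y',
      enorm (gx x y - gx x' y') <= L * Num.sqrt (enorm (x - x') ^+ 2 + enorm (y - y') ^+ 2).
Hypothesis Hly : forall x y x' y',
      enorm (gy x y - gy x' y') <= L * Num.sqrt (enorm (x - x') ^+ 2 + enorm (y - y') ^+ 2).

Lemma dF_all (w : 'rV[R]_n * 'rV[R]_m) :
  differentiable (fun w : 'rV[R]_n * 'rV[R]_m => f w.1 w.2) w.
Proof. by case: w => x y; case: (Hd x y). Qed.

Lemma dFx x y u :
  'd (fun w : 'rV[R]_n * 'rV[R]_m => f w.1 w.2) (x, y) (u, 0) = dotp (gx x y) u.
Proof. by rewrite (Hd x y).2 dotp0r addr0. Qed.

Lemma dFy x y v :
  'd (fun w : 'rV[R]_n * 'rV[R]_m => f w.1 w.2) (x, y) (0, v) = dotp (gy x y) v.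
Proof. by rewrite (Hd x y).2 dotp0r add0r. Qed.

Definition dFF (w v : 'rV[R]_n * 'rV[R]_m) : R :=
  dotp (gx w.1 w.2) v.1 + dotp (gy w.1 w.2) v.2.

Lemma dFFE w v :
  'd (fun w : 'rV[R]_n * 'rV[R]_m => f w.1 w.2) w v = dFF w v.
Proof. by case: w => x y; case: v => u v; rewrite (Hd x y).2. Qed.

Lemma desc_x x y u :
  `|f (x + u) y - f x y - dotp (gx x y) u| <= L / 2 * enorm u ^+ 2.
Proof.
have := @descent R _ (fun w : 'rV[R]_n * 'rV[R]_m => f w.1 w.2) dFF (x, y) (u, 0)
  (L * enorm u ^+ 2) dF_all (fun w => dFFE w _).
rewrite pairD [y + 0]addr0 -[(x + u, y).1]/(x + u) -[(x + u, y).2]/y -[(x, y).1]/x -[(x, y).2]/y.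
rewrite /dFF /= dotp0r addr0 mulrAC; apply => s s0 s1.
have -> : y + s *: (0 : 'rV[R]_m) = y by rewrite scaler0 addr0.
rewrite dotp0r addr0 -dotpBl.
apply: le_trans (CSabs _ _) _.
apply: le_trans (ler_wpM2r (enorm_ge0 _) (Hlx _ _ _ _)) _.
rewrite addrAC subrr add0r subrr enorm0 expr0n /= addr0 enormZ.
rewrite exprMn sqrtrM ?sqr_ge0 // sqrtr_sqr normr_id ger0_norm //.
rewrite sqrtr_sqr (ger0_norm (enorm_ge0 u)) le_eqVlt; apply/orP; left; apply/eqP; ring.
Qed.
Lemma desc_y x y v :
  `|f x (y + v) - f x y - dotp (gy x y) v| <= L / 2 * enorm v ^+ 2.
Proof.
have := @descent R _ (fun w : 'rV[R]_n * 'rV[R]_m => f w.1 w.2) dFF (x, y) (0, v)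
  (L * enorm v ^+ 2) dF_all (fun w => dFFE w _).
rewrite pairD [x + 0]addr0 -[(x, y + v).1]/x -[(x, y + v).2]/(y + v) -[(x, y).1]/x -[(x, y).2]/y.
rewrite /dFF /= dotp0r add0r mulrAC; apply => s s0 s1.
have -> : x + s *: (0 : 'rV[R]_n) = x by rewrite scaler0 addr0.
rewrite dotp0r add0r -dotpBl.
apply: le_trans (CSabs _ _) _.
apply: le_trans (ler_wpM2r (enorm_ge0 _) (Hly _ _ _ _)) _.
rewrite subrr enorm0 expr0n /= add0r addrAC subrr add0r enormZ.
rewrite exprMn sqrtrM ?sqr_ge0 // sqrtr_sqr normr_id ger0_norm //.
rewrite sqrtr_sqr (ger0_norm (enorm_ge0 v)) le_eqVlt; apply/orP; left; apply/eqP; ring.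
Qed.
End Main.




Section Main2.
Variables (R : realType) (n m : nat) (f : 'rV[R]_n -> 'rV[R]_m -> R)
  (gx : 'rV[R]_n -> 'rV[R]_m -> 'rV[R]_n)
  (gy : 'rV[R]_n -> 'rV[R]_m -> 'rV[R]_m) (L : R).
Hypothesis Hd : forall (x : 'rV[R]_n) (y : 'rV[R]_m),
      differentiable (fun w : 'rV[R]_n * 'rV[R]_m => f w.1 w.2) (x, y) /\
      forall u v, 'd (fun w : 'rV[R]_n * 'rV[R]_m => f w.1 w.2) (x, y) (u, v)
                  = dotp (gx x y) u + dotp (gy x y) v.
Hypothesis Hlx : forall x y x' y',
      enorm (gx x y - gx x' y') <= L * Num.sqrt (enorm (x - x') ^+ 2 + enorm (y - y') ^+ 2).
Hypothesis Hly : forall x y x' y',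
      enorm (gy x y - gy x' y') <= L * Num.sqrt (enorm (x - x') ^+ 2 + enorm (y - y') ^+ 2).
Variables (X : set 'rV[R]_n) (p : R).

Definition gK (x z : 'rV[R]_n) (y : 'rV[R]_m) := gx x y + p *: (x - z).

Lemma K_expand x u z y :
  Kfun f p (x + u) z y - Kfun f p x z y - dotp (gK x z y) u =
  (f (x + u) y - f x y - dotp (gx x y) u) + p / 2 * enorm u ^+ 2.
Proof.
rewrite /Kfun /gK.
have -> : x + u - z = (x - z) + u by rewrite addrAC.
rewrite (dotpDl (gx x y)) dotpZl enormD2; by field.

Qed.

Lemma K_lower x u z y :
  Kfun f p x z y + dotp (gK x z y) u + (p - L) / 2 * enorm u ^+ 2
   <= Kfun f p (x + u) z y.
Proof.
have := desc_x Hd Hlx x y u; rewrite ler_norml => /andP[h _].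
have := K_expand x u z y; lra.
Qed.

Lemma K_upper x u z y :
  Kfun f p (x + u) z y <=
  Kfun f p x z y + dotp (gK x z y) u + (p + L) / 2 * enorm u ^+ 2.
Proof.
have := desc_x Hd Hlx x y u; rewrite ler_norml => /andP[_ h].
have := K_expand x u z y; lra.
Qed.

Lemma K_cont z y : continuous (fun x => Kfun f p x z y).
Proof.
move=> x; apply: (@cont_quad R n _ x (enorm (gK x z y)) ((`|p| + `|L|) / 2)) => u.
have h1 := K_lower x u z y; have h2 := K_upper x u z y.
have h3 := CSabs (gK x z y) u; rewrite ler_norml in h3; case/andP: h3 => h3 h4.
set e := enorm u ^+ 2 in h1 h2 *.
have e0 : 0 <= e by apply: sqr_ge0.
have a1 : 0 <= (`|p| - p) * e by rewrite mulr_ge0 // subr_ge0 ler_norm.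
have a2 : 0 <= (`|L| - L) * e by rewrite mulr_ge0 // subr_ge0 ler_norm.
have a3 : 0 <= (`|p| + p) * e by rewrite mulr_ge0 // -lerBlDr sub0r -normrN ler_norm.
have a4 : 0 <= (`|L| + L) * e by rewrite mulr_ge0 // -lerBlDr sub0r -normrN ler_norm.
rewrite ler_norml; apply/andP; split; lra.
Qed.

Hypotheses (HX0 : exists x0, X x0) (HXc : closed X) (Lp : L < p).

Lemma xopt_exists y z : exists x, X x /\ forall x', X x' -> Kfun f p x z y <= Kfun f p x' z y.
Proof.
case: HX0 => x0 Xx0.
pose G := enorm (gK x0 z y).
pose r := 2 * G / (p - L) + 1.
have G0 : 0 <= G by apply: enorm_ge0.
have pL : 0 < p - L by rewrite subr_gt0.
have r0 : 0 < r.
  by rewrite /r; have := divr_ge0 (mulr_ge0 (ler0n R 2) G0) (ltW pL); lra.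
pose A := X `&` closed_ball_ (fun v => `|v|) x0 r.
have cA : compact A.
  apply: bounded_closed_compact.
    exists (`|x0| + r); split => //= M HM v [_ Av].
    apply: ltW; apply: le_lt_trans HM.
    rewrite /closed_ball_ /= in Av.
    have -> : v = x0 - (x0 - v) by rewrite opprB addrC subrK.
    apply: le_trans (ler_normB _ _) _; exact: lerD.
  apply: closedI => //; rewrite -closed_ballE //; exact: closed_ball_closed.
have Ax0 : A x0 by split => //; rewrite /closed_ball_ /= subrr normr0 ltW.
have A0 : A !=set0 by exists x0.
have [c cA' cmin] := compact_EVT_min A0 cA (continuous_subspaceT (@K_cont z y)).
have [Xc _] : A c by rewrite inE in cA'.
exists c; split => // x' Xx'.
have [Ax'|nAx'] := pselect (A x').
  by apply: cmin; rewrite inE.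
have : r < enorm (x' - x0).
  rewrite ltNge; apply/negP => h; apply: nAx'; split => //.
  rewrite /closed_ball_ /= distrC; exact: le_trans (mx_le_enorm _) h.
move=> hr.
have Kx0 : Kfun f p c z y <= Kfun f p x0 z y by apply: cmin; rewrite inE.
apply: le_trans Kx0 _.
have hK := K_lower x0 (x' - x0) z y; rewrite [x0 + _]addrC subrK in hK.
have := CSabs (gK x0 z y) (x' - x0); rewrite ler_norml -/G => /andP[h _].
set e := enorm (x' - x0) in hr h hK *.
have e0 : 0 <= e by apply: enorm_ge0.
have : 2 * G < (p - L) * e.
  rewrite -ltr_pdivrMl // mulrC; apply: lt_trans hr; rewrite /r ltrDl //.
move=> h2; have h4 : 0 <= (p - L) * e - 2 * G by lra.
have h3 := mulr_ge0 e0 h4.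
lra.
Qed.
End Main2.




Lemma lim0 (R : realType) (a b c : R) :
  (forall l, 0 < l -> l <= 1 -> a <= b + c * l) -> a <= b.
Proof.
move=> H; rewrite leNgt; apply/negP => ab.
have c1 : 0 < `|c| + 1 by rewrite ltr_pwDr.
pose l := Num.min 1 ((a - b) / (2 * (`|c| + 1))).
have l0 : 0 < l by rewrite lt_min ltr01 divr_gt0 // ?subr_gt0 // mulr_gt0.
have l1 : l <= 1 by rewrite ge_min lexx.
have l2 : l <= (a - b) / (2 * (`|c| + 1)) by rewrite ge_min lexx orbT.
have := H l l0 l1.
have : c * l <= (`|c| + 1) * l.
  by apply: ler_wpM2r; [exact: ltW | apply: ler_wpDr => //; exact: ler_norm].
have : (`|c| + 1) * l <= (a - b) / 2.
  rewrite -ler_pdivlMl // (le_trans l2) // invfM mulrC mulrA.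
  by rewrite le_eqVlt; apply/orP; left; apply/eqP; ring.

lra.
Qed.

Lemma conv_in (R : realType) (n : nat) (X : set 'rV[R]_n) (x y : 'rV[R]_n) (s : R) :
  convex_set X -> X x -> X y -> 0 <= s -> s <= 1 -> X (y + s *: (x - y)).
Proof.
move=> cX Xx Xy s0 s1.
have := cX x y (Itv01 s0 s1) (mem_set Xx) (mem_set Xy).
rewrite inE.
have -> : y + s *: (x - y) = s *: x + (1 - s) *: y.
  by rewrite scalerBr scalerBl scale1r addrCA.
by [].
Qed.

Section Main3.
Variables (R : realType) (n m : nat) (f : 'rV[R]_n -> 'rV[R]_m -> R)
  (gx : 'rV[R]_n -> 'rV[R]_m -> 'rV[R]_n)
  (gy : 'rV[R]_n -> 'rV[R]_m -> 'rV[R]_m) (L : R).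
Hypothesis Hd : forall (x : 'rV[R]_n) (y : 'rV[R]_m),
      differentiable (fun w : 'rV[R]_n * 'rV[R]_m => f w.1 w.2) (x, y) /\
      forall u v, 'd (fun w : 'rV[R]_n * 'rV[R]_m => f w.1 w.2) (x, y) (u, v)
                  = dotp (gx x y) u + dotp (gy x y) v.
Hypothesis Hconc : forall x (y1 y2 : 'rV[R]_m) (l : R), 0 <= l -> l <= 1 ->
      l * f x y1 + (1 - l) * f x y2 <= f x (l *: y1 + (1 - l) *: y2).
Hypothesis Hlx : forall x y x' y',
      enorm (gx x y - gx x' y') <= L * Num.sqrt (enorm (x - x') ^+ 2 + enorm (y - y') ^+ 2).
Hypothesis Hly : forall x y x' y',
      enorm (gy x y - gy x' y') <= L * Num.sqrt (enorm (x - x') ^+ 2 + enorm (y - y') ^+ 2).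
Variables (X : set 'rV[R]_n) (p : R).
Hypotheses (HX0 : exists x0, X x0) (HXc : closed X) (HXconv : convex_set X) (Lp : L < p).

Local Notation xo := (xopt f p X).

Lemma xopt_spec y z : X (xo y z) /\
  forall x', X x' -> Kfun f p (xo y z) z y <= Kfun f p x' z y.
Proof. exact: (getPex (xopt_exists Hd Hlx HX0 HXc Lp y z)). Qed.

Lemma opt_cond y z x : X x -> 0 <= dotp (gK gx p (xo y z) z y) (x - xo y z).
Proof.
move=> Xx.
have [Xs Hmin] := xopt_spec y z.
set xs := xo y z in Xs Hmin *.
set d := x - xs.
set G := dotp (gK gx p xs z y) d.
suff : - G <= 0 by lra.
apply: (@lim0 R _ _ ((p + L) / 2 * enorm d ^+ 2)) => l l0 l1.
have Xl : X (xs + l *: d) := conv_in HXconv Xx Xs (ltW l0) l1.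
have h1 := Hmin _ Xl.
have h2 := K_upper Hd Hlx p xs (l *: d) z y.
rewrite dotpZr enormZ (ger0_norm (ltW l0)) -/G exprMn in h2.
rewrite -(ler_pM2r l0).
set e := enorm d ^+ 2 in h2 *.
lra.
Qed.

Lemma xlip (L0 : 0 <= L) y1 y2 z :
  (p ^+ 2 - L ^+ 2) * enorm (xo y1 z - xo y2 z) ^+ 2 <= L ^+ 2 * enorm (y1 - y2) ^+ 2.
Proof.
have [X1 _] := xopt_spec y1 z; have [X2 _] := xopt_spec y2 z.
have h1 := opt_cond y1 z X2; have h2 := opt_cond y2 z X1.
set x1 := xo y1 z in X1 h1 h2 *; set x2 := xo y2 z in X2 h1 h2 *.
rewrite /gK in h1 h2.
have e1 : x2 - x1 = - (x1 - x2) by rewrite opprB.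
rewrite e1 dotpNr (dotpDl (gx x1 y1)) dotpZl in h1.
rewrite (dotpDl (gx x2 y2)) dotpZl in h2.
have e2 : dotp (x1 - z) (x1 - x2) - dotp (x2 - z) (x1 - x2) = dotp (x1 - x2) (x1 - x2).
  by rewrite -dotpBl; congr dotp; rewrite opprB addrA subrK.
have h3 := CSabs (gx x1 y1 - gx x2 y2) (x1 - x2).
rewrite dotpBl ler_norml in h3; case/andP: h3 => h3 _.
have h4 := ler_wpM2r (enorm_ge0 (x1 - x2)) (Hlx x1 y1 x2 y2).
rewrite -enorm_sq in e2.
set a := enorm (x1 - x2) in e2 h3 h4 *.
set b := enorm (y1 - y2).
set S := Num.sqrt (a ^+ 2 + b ^+ 2) in h4.
have key : p * a ^+ 2 <= L * S * a.
  have : p * (dotp (x1 - z) (x1 - x2) - dotp (x2 - z) (x1 - x2)) = p * a ^+ 2 by rewrite e2.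
  lra.
have a0 : 0 <= a by apply: enorm_ge0.
have S0 : 0 <= S by apply: sqrtr_ge0.
have SS : S ^+ 2 = a ^+ 2 + b ^+ 2 by rewrite sqr_sqrtr // addr_ge0 // sqr_ge0.
have [a00|ap] := eqVneq a 0.
  by rewrite a00 expr0n /= mulr0 mulr_ge0 // sqr_ge0.
have ap' : 0 < a by rewrite lt_def ap a0.
have k2 : p * a <= L * S.
  by rewrite -(ler_pM2r ap') -mulrA -expr2.
have pa0 : 0 <= p * a by rewrite mulr_ge0 // ltW // (le_lt_trans L0 Lp).
have := ler_pM pa0 pa0 k2 k2.
have -> : L * S * (L * S) = L ^+ 2 * S ^+ 2 by ring.
rewrite SS; nra.
Qed.

Lemma conc_grad x y1 y2 : f x y1 - f x y2 <= dotp (gy x y2) (y1 - y2).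
Proof.
apply: (@lim0 R _ _ (L / 2 * enorm (y1 - y2) ^+ 2)) => l l0 l1.
have hc := Hconc x y1 y2 (ltW l0) l1.
have e : l *: y1 + (1 - l) *: y2 = y2 + l *: (y1 - y2).
  by rewrite scalerBr scalerBl scale1r addrCA.
rewrite e in hc.
have hd := desc_y Hd Hly x y2 (l *: (y1 - y2)).
rewrite ler_norml in hd; case/andP: hd => _ hd.
rewrite dotpZr enormZ (ger0_norm (ltW l0)) exprMn in hd.
rewrite -(ler_pM2r l0).
set e2 := enorm (y1 - y2) ^+ 2 in hd *.
lra.
Qed.
End Main3.




Section Lin.
Variable R : realType.
Variable k : nat.
Definition dotl (g : 'rV[R]_k) : 'rV[R]_k -> R := fun v => dotp g v.
Lemma dotl_linear (g : 'rV[R]_k) : linear (dotl g).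
Proof. by move=> a u v; rewrite /dotl dotpDr dotpZr. Qed.
HB.instance Definition _ (g : 'rV[R]_k) :=
  GRing.isLinear.Build R 'rV[R]_k R *:%R (dotl g) (dotl_linear g).

Lemma dotl_cont (g : 'rV[R]_k) : continuous (dotl g).
Proof.
move=> x; apply: (@cont_quad R k _ x (enorm g) 0) => u.
rewrite /dotl dotpDr addrAC subrr add0r mul0r addr0; exact: CSabs.
Qed.

Lemma enorm_gt0 (u : 'rV[R]_k) : u != 0 -> 0 < enorm u.
Proof.
move=> u0; rewrite lt_def enorm_ge0 andbT; apply/eqP => h.
have : dotp u u = 0 by rewrite -enorm_sq h expr0n.
by move/dotp_eq0 => h'; rewrite h' eqxx in u0.
Qed.
End Lin.

Lemma kappa_le (R : realType) (L p : R) : 0 <= L -> L < p ->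
  Num.sqrt (p ^+ 2 / (p ^+ 2 - L ^+ 2)) <= (1 + 2 * (p + L) / (p - L)) / 2.
Proof.
move=> L0 Lp.
have pL : 0 < p - L by rewrite subr_gt0.
have p0 : 0 < p by apply: le_lt_trans Lp.
have pL2 : 0 < p ^+ 2 - L ^+ 2.
  have -> : p ^+ 2 - L ^+ 2 = (p - L) * (p + L) by ring.
  by rewrite mulr_gt0 // ltr_wpDr.
have -> : (1 + 2 * (p + L) / (p - L)) / 2 = (3 * p + L) / (2 * (p - L)).
  by field; rewrite gt_eqF.
have t0 : 0 <= (3 * p + L) / (2 * (p - L)).
  by apply: divr_ge0; lra.
rewrite -(ger0_norm t0) -sqrtr_sqr ler_sqrt ?sqr_ge0 //.
rewrite expr_div_n ler_pdivrMr // mulrAC ler_pdivlMr ?exprn_gt0 ?mulr_gt0 //.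
have D0 : 0 <= (p - L) * (5 * p ^+ 3 + 19 * p ^+ 2 * L + 7 * p * L ^+ 2 + L ^+ 3).
  apply: mulr_ge0; first lra.
  have q1 := exprn_ge0 3 (ltW p0).
  have q2 := mulr_ge0 (exprn_ge0 2 (ltW p0)) L0.
  have q3 := mulr_ge0 (ltW p0) (exprn_ge0 2 L0).
  have q4 := exprn_ge0 3 L0.
  lra.
have -> : (3 * p + L) ^+ 2 * (p ^+ 2 - L ^+ 2) =
   p ^+ 2 * (2 * (p - L)) ^+ 2 +
   (p - L) * (5 * p ^+ 3 + 19 * p ^+ 2 * L + 7 * p * L ^+ 2 + L ^+ 3) * 1.
  ring.
by rewrite mulr1 lerDl.
Qed.

Lemma norm_id (R : realType) (k : nat) (x z z' : 'rV[R]_k) :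
  enorm (x - z') ^+ 2 - enorm (x - z) ^+ 2 = dotp (z' - z) (z' + z - 2%:R *: x).
Proof.
rewrite !enorm_sq !(dotpBl, dotpBr, dotpDl, dotpDr, dotpNr, dotpZl, dotpZr).
rewrite (dotpC z' x) (dotpC z x) (dotpC z z'); ring.
Qed.

Section Main4.
Variables (R : realType) (n m : nat) (f : 'rV[R]_n -> 'rV[R]_m -> R)
  (gx : 'rV[R]_n -> 'rV[R]_m -> 'rV[R]_n)
  (gy : 'rV[R]_n -> 'rV[R]_m -> 'rV[R]_m) (L : R).
Hypothesis Hd : forall (x : 'rV[R]_n) (y : 'rV[R]_m),
      differentiable (fun w : 'rV[R]_n * 'rV[R]_m => f w.1 w.2) (x, y) /\
      forall u v, 'd (fun w : 'rV[R]_n * 'rV[R]_m => f w.1 w.2) (x, y) (u, v)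
                  = dotp (gx x y) u + dotp (gy x y) v.
Hypothesis Hconc : forall x (y1 y2 : 'rV[R]_m) (l : R), 0 <= l -> l <= 1 ->
      l * f x y1 + (1 - l) * f x y2 <= f x (l *: y1 + (1 - l) *: y2).
Hypothesis Hlx : forall x y x' y',
      enorm (gx x y - gx x' y') <= L * Num.sqrt (enorm (x - x') ^+ 2 + enorm (y - y') ^+ 2).
Hypothesis Hly : forall x y x' y',
      enorm (gy x y - gy x' y') <= L * Num.sqrt (enorm (x - x') ^+ 2 + enorm (y - y') ^+ 2).
Variables (X : set 'rV[R]_n) (p : R).
Hypotheses (HX0 : exists x0, X x0) (HXc : closed X) (HXconv : convex_set X) (Lp : L < p).

Local Notation xo := (xopt f p X).
Local Notation dd := (dfun f p X).
Let kappa := Num.sqrt (p ^+ 2 / (p ^+ 2 - L ^+ 2)).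

Lemma L_nonneg (y0 y1 : 'rV[R]_m) (x : 'rV[R]_n) : y1 != y0 -> 0 <= L.
Proof.
move=> ne.
have e0 : 0 < enorm (y1 - y0) by apply: enorm_gt0; rewrite subr_eq0.
have h := Hly x y1 x y0.
rewrite subrr enorm0 expr0n add0r sqrtr_sqr ger0_norm ?enorm_ge0 // in h.
have := le_trans (enorm_ge0 _) h.
by rewrite pmulr_lge0.
Qed.

Lemma S_bound (L0 : 0 <= L) y0 y1 z :
  Num.sqrt (enorm (xo y1 z - xo y0 z) ^+ 2 + enorm (y1 - y0) ^+ 2)
  <= kappa * enorm (y1 - y0).
Proof.
have h := xlip Hd Hlx HX0 HXc HXconv Lp L0 y1 y0 z.
set a := enorm (xo y1 z - xo y0 z) in h *.
set b := enorm (y1 - y0) in h *.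
have pL : 0 < p - L by rewrite subr_gt0.
have p0 : 0 < p by apply: le_lt_trans Lp.
have pL2 : 0 < p ^+ 2 - L ^+ 2.
  have -> : p ^+ 2 - L ^+ 2 = (p - L) * (p + L) by ring.
  by rewrite mulr_gt0 // ltr_wpDr.
have q0 : 0 <= p ^+ 2 / (p ^+ 2 - L ^+ 2) by rewrite divr_ge0 // ?sqr_ge0 // ltW.
have k0 : 0 <= kappa by apply: sqrtr_ge0.
have b0 : 0 <= b by apply: enorm_ge0.
rewrite -(ger0_norm (mulr_ge0 k0 b0)) -sqrtr_sqr ler_sqrt ?sqr_ge0 //.
have kk : kappa ^+ 2 = p ^+ 2 / (p ^+ 2 - L ^+ 2) by rewrite /kappa sqr_sqrtr.
rewrite exprMn kk mulrAC ler_pdivlMr //.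
lra.
Qed.

Lemma lower_y y y' z :
  dotp (gy (xo y z) y) (y' - y) - L * kappa * enorm (y' - y) ^+ 2
  <= dd y' z - dd y z.
Proof.
have [Xx minx] := xopt_spec Hd Hlx HX0 HXc Lp y z.
have [Xx1 minx1] := xopt_spec Hd Hlx HX0 HXc Lp y' z.
have h1 := minx _ Xx1.
rewrite /dfun.
set x := xo y z in Xx minx h1 *; set x1 := xo y' z in Xx1 minx1 h1 *.
have h2 := conc_grad Hd Hconc Hly x1 y y'.
have e1 : y - y' = - (y' - y) by rewrite opprB.
rewrite e1 dotpNr in h2.
have h3 := CSabs (gy x1 y' - gy x y) (y' - y).
rewrite dotpBl ler_norml in h3; case/andP: h3 => h3 _.
have h4 := ler_wpM2r (enorm_ge0 (y' - y)) (Hly x1 y' x y).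
set b := enorm (y' - y) in h3 h4 *.
set S := Num.sqrt _ in h4.
have h5 : L * S * b <= L * kappa * b ^+ 2.
  have [b0|bn0] := eqVneq b 0.
    by rewrite b0 mulr0 expr0n mulr0.
  have yne : y' != y.
    by apply/eqP => e; move: bn0; rewrite /b e subrr enorm0 eqxx.
  have L0 := L_nonneg x yne.
  rewrite expr2 mulrA ler_wpM2r ?enorm_ge0 // -mulrA ler_wpM2l //.
  exact: (S_bound L0 y y' z).
have eK : Kfun f p x1 z y' - Kfun f p x1 z y = f x1 y' - f x1 y.
  by rewrite /Kfun; ring.
lra.
Qed.

Lemma upper_y y y' z :
  dd y' z - dd y z - dotp (gy (xo y z) y) (y' - y) <= L / 2 * enorm (y' - y) ^+ 2.
Proof.
have [Xx minx] := xopt_spec Hd Hlx HX0 HXc Lp y z.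
have [Xx1 minx1] := xopt_spec Hd Hlx HX0 HXc Lp y' z.
have h1 := minx1 _ Xx.
rewrite /dfun.
set x := xo y z in Xx minx h1 *; set x1 := xo y' z in Xx1 minx1 h1 *.
have h2 := desc_y Hd Hly x y (y' - y).
have ey : y + (y' - y) = y' by rewrite addrC subrK.
rewrite ey ler_norml in h2; case/andP: h2 => _ h2.
have eK : Kfun f p x z y' - Kfun f p x z y = f x y' - f x y.
  by rewrite /Kfun; ring.
lra.
Qed.

Lemma z_step y z z' :
  p / 2 * dotp (z' - z) (z' + z - 2%:R *: xo y z') <= dd y z' - dd y z.
Proof.
have [Xx' _] := xopt_spec Hd Hlx HX0 HXc Lp y z'.
have [_ minz] := xopt_spec Hd Hlx HX0 HXc Lp y z.
have h := minz _ Xx'.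
rewrite /dfun -norm_id.
move: h; rewrite /Kfun.
set x' := xo y z'.
lra.
Qed.

Lemma danskin y0 z :
  differentiable (fun y => dd y z) y0 /\
  forall v, 'd (fun y => dd y z) y0 v = dotp (gy (xo y0 z) y0) v.
Proof.
set g := gy (xo y0 z) y0.
have [D E] : differentiable (fun y => dd y z) y0 /\
    'd (fun y => dd y z) y0 = dotl g :> (_ -> _).
  apply: (@diff_of_bound R _ _ y0 (dotl g) ((`|L| / 2 + `|L * kappa|) * m%:R) (@dotl_cont R m g)).
  move=> u u1.
  have lo := lower_y y0 (y0 + u) z; have up := upper_y y0 (y0 + u) z.
  have eu : y0 + u - y0 = u by rewrite addrC addKr.
  rewrite eu -/g in lo up.
  change (`|dd (y0 + u) z - dd y0 z - dotp g u| <= (`|L| / 2 + `|L * kappa|) * m%:R * `|u| ^+ 2).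
  have hm := enorm_le_mx u.
  set b2 := enorm u ^+ 2 in lo up hm *.
  have b0 : 0 <= b2 by apply: sqr_ge0.
  have q1 : L / 2 * b2 <= `|L| / 2 * b2.
    by apply: ler_wpM2r => //; apply: ler_wpM2r => //; apply: ler_norm.
  have q2 : L * kappa * b2 <= `|L * kappa| * b2.
    by apply: ler_wpM2r => //; apply: ler_norm.
  have q3 : (`|L| / 2 + `|L * kappa|) * b2 <= (`|L| / 2 + `|L * kappa|) * (m%:R * `|u| ^+ 2).
    by apply: ler_wpM2l => //; apply: addr_ge0 => //; apply: divr_ge0.
  have q4 : 0 <= `|L| / 2 * b2 by apply: mulr_ge0 => //; apply: divr_ge0.
  have q5 : 0 <= `|L * kappa| * b2 by apply: mulr_ge0.
  rewrite mulrA in q3; set U := _ * `|u| ^+ 2 in q3 *.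
  rewrite ler_norml; apply/andP; split; lra.
split => // v; by rewrite E.
Qed.
End Main4.


Unset Implicit Arguments. Set Strict Implicit. Set Printing Implicit Defensive.

Theorem lemma7 (R : realType) (n m : nat)
  (X : set 'rV[R]_n) (Y : set 'rV[R]_m)
  (f : 'rV[R]_n -> 'rV[R]_m -> R)
  (gx : 'rV[R]_n -> 'rV[R]_m -> 'rV[R]_n)
  (gy : 'rV[R]_n -> 'rV[R]_m -> 'rV[R]_m)
  (L p c alpha beta : R)
  (xs : nat -> 'rV[R]_n) (ys : nat -> 'rV[R]_m) (zs : nat -> 'rV[R]_n) :
  (* X nonempty closed convex; Y nonempty closed convex compact *)
  (exists x0, X x0) -> closed X -> convex_set X ->
  (exists y0, Y y0) -> closed Y -> convex_set Y -> compact Y ->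
  (* f is differentiable with partial gradients gx, gy *)
  (forall (x : 'rV[R]_n) (y : 'rV[R]_m),
      differentiable (fun w : 'rV[R]_n * 'rV[R]_m => f w.1 w.2) (x, y) /\
      forall u v, 'd (fun w : 'rV[R]_n * 'rV[R]_m => f w.1 w.2) (x, y) (u, v)
                  = dotp (gx x y) u + dotp (gy x y) v) ->
  (* f(x,.) concave *)
  (forall x (y1 y2 : 'rV[R]_m) (l : R), 0 <= l -> l <= 1 ->
      l * f x y1 + (1 - l) * f x y2 <= f x (l *: y1 + (1 - l) *: y2)) ->
  (* grad_x f and grad_y f are L-Lipschitz (Euclidean norm on R^n x R^m) *)
  (forall x y x' y',
      enorm (gx x y - gx x' y') <= L * Num.sqrt (enorm (x - x') ^+ 2 + enorm (y - y') ^+ 2)) ->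
  (forall x y x' y',
      enorm (gy x y - gy x' y') <= L * Num.sqrt (enorm (x - x') ^+ 2 + enorm (y - y') ^+ 2)) ->
  L < p -> 0 < c -> 0 < alpha -> 0 < beta -> beta <= 1 ->
  (* Smoothed-GDA iterations *)
  (forall t, xs t.+1 = eproj X (xs t - c *: gradxK gx p (xs t) (zs t) (ys t))) ->
  (forall t, ys t.+1 = eproj Y (ys t + alpha *: gradyK gy (xs t.+1) (zs t) (ys t))) ->
  (forall t, zs t.+1 = zs t + beta *: (xs t.+1 - zs t)) ->
  let sigma2 := 2 * (p + L) / (p - L) in
  let Ld := L + L * sigma2 in
  forall t : nat,
    (* grad_y K(x(y^t,z^t),z^t;y^t) = grad_y d(y^t,z^t) *)
    (differentiable (fun y => dfun f p X y (zs t)) (ys t) /\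
     forall v, 'd (fun y => dfun f p X y (zs t)) (ys t) v
               = dotp (gradyK gy (xopt f p X (ys t) (zs t)) (zs t) (ys t)) v) /\
    dfun f p X (ys t.+1) (zs t.+1) - dfun f p X (ys t) (zs t) >=
      dotp (gradyK gy (xopt f p X (ys t) (zs t)) (zs t) (ys t)) (ys t.+1 - ys t)
      - Ld / 2 * enorm (ys t - ys t.+1) ^+ 2
      + p / 2 * dotp (zs t.+1 - zs t)
                     (zs t.+1 + zs t - 2%:R *: xopt f p X (ys t.+1) (zs t.+1)).
Proof.
move=> HX0 HXc HXconv _ _ _ _ Hd Hconc Hlx Hly Lp _ _ _ _ _ _ _ sigma2 Ld t.
split.
  have [D E] := danskin Hd Hconc Hlx Hly HX0 HXc HXconv Lp (ys t) (zs t).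
  by split => // v; rewrite E.
have lo := lower_y Hd Hconc Hlx Hly HX0 HXc HXconv Lp (ys t) (ys t.+1) (zs t).
have zz := z_step Hd Hlx HX0 HXc Lp (ys t.+1) (zs t) (zs t.+1).
rewrite /gradyK enormB.
set b2 := enorm (ys t.+1 - ys t) ^+ 2 in lo *.
set kappa := Num.sqrt (p ^+ 2 / (p ^+ 2 - L ^+ 2)) in lo.
have hb : L * kappa * b2 <= Ld / 2 * b2.
  have [e|ne] := eqVneq (ys t.+1) (ys t).
    by rewrite /b2 e subrr enorm0 expr0n /= !mulr0.
  have L0 := L_nonneg Hly (xs t) ne.
  apply: ler_wpM2r; first exact: sqr_ge0.
  have := kappa_le L0 Lp; rewrite -/kappa => hk.
  have := ler_wpM2l L0 hk.
  rewrite /Ld /sigma2.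
  move=> h; apply: le_trans h _.
  rewrite le_eqVlt; apply/orP; left; apply/eqP.
  ring.
lra.
Qed.
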